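(* Let $B$ be a (closed, filled) convex $n$-sided polygon in $D$ with $n\geq 2$ such that $\rho(\psi_B)$ is rational. Then $\psi_B$ is not conjugate to a rotation.
   Context: $D$ is the open unit disk in $\mathbb R^2$, $S^1$ its boundary circle identified with $\mathbb R/\mathbb Z$ via the counterclockwise normalized angle. For a closed convex $U\subset D$ and $v\in S^1$, $\psi_U(v)$ is the point $w\in S^1\setminus\{v\}$ such that the line $vw$ meets $U$ and $U$ lies in the closed half-plane to the left of the directed line from $v$ to $w$; it is an orientation-preserving homeomorphism of $S^1$. For such $f$, $\rho(f)=\lim_{n\to\infty}(\overline f^n(x)-x)/n$ with $\overline f$ the lift to $\mathbb R$ satisfying $\overline f(0)\in[0,1)$. ''Conjugate to a rotation'' means $h\circ\psi_B\circ h^{-1}$ is a rigid rotation of $S^1$ for some homeomorphism $h$ of $S^1$. *)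

(* Defs.v *)
From Stdlib Require Import Reals Lra ClassicalEpsilon.
Open Scope R_scope.

Definition pt := (R * R)%type.

Definition in_disk (p : pt) : Prop := fst p ^ 2 + snd p ^ 2 < 1.
Definition on_circle (p : pt) : Prop := fst p ^ 2 + snd p ^ 2 = 1.

(* Identification R/Z -> S^1 by counterclockwise normalized angle. *)
Definition e (t : R) : pt := (cos (2 * PI * t), sin (2 * PI * t)).

Definition dist2 (p q : pt) : R := sqrt ((fst p - fst q) ^ 2 + (snd p - snd q) ^ 2).

(* cross product of (q - p) and (u - p): >= 0 iff u is in the closed
   half-plane to the left of the directed line from p to q *)
Definition cross (p q u : pt) : R :=
  (fst q - fst p) * (snd u - snd p) - (snd q - snd p) * (fst u - fst p).

Definition psi_rel (U : pt -> Prop) (v w : pt) : Prop :=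
  on_circle w /\ w <> v /\
  (exists u t, U u /\ u = (fst v + t * (fst w - fst v), snd v + t * (snd w - snd v))) /\
  (forall u, U u -> 0 <= cross v w u).

(* psi_U(v): the (unique, for U as in the paper) point with the property above. *)
Definition psi (U : pt -> Prop) (v : pt) : pt :=
  epsilon (inhabits v) (fun w => psi_rel U v w).

Fixpoint rsum (f : nat -> R) (n : nat) : R :=
  match n with O => 0 | S m => rsum f m + f m end.

Definition in_hull (I : nat -> Prop) (n : nat) (P : nat -> pt) (x : pt) : Prop :=
  exists l : nat -> R,
    (forall i, (i < n)%nat -> 0 <= l i) /\
    (forall i, (i < n)%nat -> ~ I i -> l i = 0) /\
    rsum l n = 1 /\
    x = (rsum (fun i => l i * fst (P i)) n, rsum (fun i => l i * snd (P i)) n).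

(* B is a closed filled convex n-gon with vertices P 0, ..., P (n-1):
   B is the convex hull of the P i, which are in convex position
   (no vertex lies in the convex hull of the others). *)
Definition convex_polygon (n : nat) (P : nat -> pt) (B : pt -> Prop) : Prop :=
  (forall x, B x <-> in_hull (fun _ => True) n P x) /\
  (forall j, (j < n)%nat -> ~ in_hull (fun i => i <> j) n P (P j)).

Definition circle_continuous (f : pt -> pt) : Prop :=
  forall x, on_circle x -> forall eps, 0 < eps -> exists delta, 0 < delta /\
    forall y, on_circle y -> dist2 y x < delta -> dist2 (f y) (f x) < eps.

Definition circle_homeo (h : pt -> pt) : Prop :=
  (forall x, on_circle x -> on_circle (h x)) /\ circle_continuous h /\
  exists g : pt -> pt,
    (forall x, on_circle x -> on_circle (g x)) /\ circle_continuous g /\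
    (forall x, on_circle x -> g (h x) = x) /\
    (forall x, on_circle x -> h (g x) = x).

Definition rot (a : R) (p : pt) : pt :=
  (cos a * fst p - sin a * snd p, sin a * fst p + cos a * snd p).

Definition conj_to_rotation (f : pt -> pt) : Prop :=
  exists h a, circle_homeo h /\ forall x, on_circle x -> h (f x) = rot a (h x).

Definition is_lift (f : pt -> pt) (F : R -> R) : Prop :=
  continuity F /\ (forall t, e (F t) = f (e t)) /\ 0 <= F 0 < 1.

Definition rotation_number_is (f : pt -> pt) (r : R) : Prop :=
  exists F, is_lift f F /\
    forall x, Un_cv (fun n => (Nat.iter n F x - x) / INR n) r.

Definition is_rational (r : R) : Prop :=
  exists p q : Z, (0 < q)%Z /\ r = IZR p / IZR q.

(* Main.v *)
Require Import Defs.
From Stdlib Require Import Reals Lra Lia Psatz ClassicalEpsilon Classical ZArith.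
Open Scope R_scope.

Lemma rsum_ext f g n : (forall i, (i < n)%nat -> f i = g i) -> rsum f n = rsum g n.
Proof. induction n; simpl; intros H; auto. rewrite IHn by (intros; apply H; lia). rewrite H by lia; auto. Qed.

Lemma rsum_aff (l x y : nat -> R) a b c n :
  rsum (fun i => l i * (a + b * x i + c * y i)) n =
  a * rsum l n + b * rsum (fun i => l i * x i) n + c * rsum (fun i => l i * y i) n.
Proof. induction n; simpl; [ring|]. rewrite IHn; ring. Qed.

Lemma rsum_nonneg f n : (forall i, (i < n)%nat -> 0 <= f i) -> 0 <= rsum f n.
Proof. induction n; simpl; intros H; [lra|]. pose proof (H n ltac:(lia)). pose proof (IHn ltac:(intros; apply H; lia)). lra. Qed.

Lemma rsum_zero_all f n : (forall i, (i < n)%nat -> 0 <= f i) -> rsum f n = 0 -> forall i, (i < n)%nat -> f i = 0.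
Proof. induction n; simpl; intros H E i Hi; [lia|].
  assert (0 <= rsum f n) by (apply rsum_nonneg; intros; apply H; lia).
  pose proof (H n ltac:(lia)).
  destruct (Nat.eq_dec i n). subst; lra. apply IHn; try lra; try lia. intros; apply H; lia. Qed.

Lemma rsum_pos_ex f n : rsum f n = 1 -> exists i, (i < n)%nat /\ f i <> 0.
Proof. induction n; simpl; intros H; [lra|].
  destruct (Req_dec (f n) 0) as [E|E]. destruct IHn as [i [? ?]]; [lra|]. exists i; split; auto; lia.
  exists n; split; auto; lia. Qed.

Lemma rsum_zero n : rsum (fun _ => 0) n = 0.
Proof. induction n; simpl; [ring|]. rewrite IHn; ring. Qed.

Lemma rsum_ind f i n : (i < n)%nat -> rsum (fun k => if Nat.eqb k i then f k else 0) n = f i.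
Proof. induction n; intros Hi; [lia|]. simpl. destruct (Nat.eq_dec i n).
  subst. rewrite Nat.eqb_refl. rewrite (rsum_ext _ (fun _ => 0)). 2:{ intros k Hk. destruct (Nat.eqb_spec k n); [lia|auto]. }
  rewrite rsum_zero; ring.
  rewrite IHn by lia. destruct (Nat.eqb_spec n i); [lia|ring]. Qed.

Definition dot (p q : pt) := fst p * fst q + snd p * snd q.
Definition crs (p q : pt) := fst p * snd q - snd p * fst q.

Lemma vertex_in_hull n P i : (i < n)%nat -> in_hull (fun _ => True) n P (P i).
Proof. intros Hi. exists (fun k => if Nat.eqb k i then 1 else 0). repeat split.
  - intros k _. destruct (Nat.eqb k i); lra.
  - intros k _ H; exfalso; auto.
  - apply (rsum_ind (fun _ => 1)); auto.
  - destruct (P i) as [a b] eqn:E. f_equal.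
    + rewrite (rsum_ext _ (fun k => if Nat.eqb k i then fst (P k) else 0)).
      rewrite rsum_ind; auto. rewrite E; auto. intros k _; destruct (Nat.eqb k i); ring.
    + rewrite (rsum_ext _ (fun k => if Nat.eqb k i then snd (P k) else 0)).
      rewrite rsum_ind; auto. rewrite E; auto. intros k _; destruct (Nat.eqb k i); ring.
Qed.

Lemma vertices_distinct n P B : convex_polygon n P B -> forall i j, (i < n)%nat -> (j < n)%nat -> i <> j -> P i <> P j.
Proof. intros [_ H] i j Hi Hj Hij E. apply (H j Hj). 
  exists (fun k => if Nat.eqb k i then 1 else 0). repeat split.
  - intros k _. destruct (Nat.eqb k i); lra.
  - intros k _ Hk. destruct (Nat.eqb_spec k i); [exfalso; apply Hk; lia| auto].
  - apply (rsum_ind (fun _ => 1)); auto.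
  - rewrite <- E. destruct (P i) as [a b] eqn:E'. f_equal.
    + rewrite (rsum_ext _ (fun k => if Nat.eqb k i then fst (P k) else 0)).
      rewrite rsum_ind; auto. rewrite E'; auto. intros k _; destruct (Nat.eqb k i); ring.
    + rewrite (rsum_ext _ (fun k => if Nat.eqb k i then snd (P k) else 0)).
      rewrite rsum_ind; auto. rewrite E'; auto. intros k _; destruct (Nat.eqb k i); ring.
Qed.

Lemma cross_aff v w u : cross v w u = (fst v * (snd w - snd v) - snd v * (fst w - fst v)) + (- (snd w - snd v)) * fst u + (fst w - fst v) * snd u.
Proof. unfold cross; ring. Qed.

Lemma hull_cross_nonneg n P v w x : in_hull (fun _ => True) n P x ->
  (forall i, (i < n)%nat -> 0 <= cross v w (P i)) -> 0 <= cross v w x.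
Proof. intros [l [Hl [_ [Hs Hx]]]] H. subst x. rewrite cross_aff. simpl.
  set (a := (fst v * (snd w - snd v) - snd v * (fst w - fst v))).
  set (b := (- (snd w - snd v))). set (c := (fst w - fst v)).
  replace (a + b * rsum (fun i => l i * fst (P i)) n + c * rsum (fun i => l i * snd (P i)) n)
  with (a * rsum l n + b * rsum (fun i => l i * fst (P i)) n + c * rsum (fun i => l i * snd (P i)) n) by (rewrite Hs; ring).
  rewrite <- rsum_aff. apply rsum_nonneg. intros i Hi. apply Rmult_le_pos; auto.
  pose proof (H i Hi). rewrite cross_aff in H0. exact H0. Qed.

Lemma hull_cross_zero n P v w x : in_hull (fun _ => True) n P x ->
  (forall i, (i < n)%nat -> 0 <= cross v w (P i)) -> cross v w x = 0 ->
  exists i, (i < n)%nat /\ cross v w (P i) = 0.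
Proof. intros [l [Hl [_ [Hs Hx]]]] H E. subst x. rewrite cross_aff in E. simpl in E.
  set (a := (fst v * (snd w - snd v) - snd v * (fst w - fst v))) in *.
  set (b := (- (snd w - snd v))) in *. set (c := (fst w - fst v)) in *.
  assert (E2 : rsum (fun i => l i * (a + b * fst (P i) + c * snd (P i))) n = 0).
  { rewrite rsum_aff, Hs. lra. }
  assert (Hz := rsum_zero_all _ _ ltac:(intros i Hi; apply Rmult_le_pos; [apply Hl; exact Hi| pose proof (H i Hi) as Q; rewrite cross_aff in Q; exact Q]) E2).
  destruct (rsum_pos_ex _ _ Hs) as [i [Hi Hli]]. exists i; split; auto.
  specialize (Hz i Hi). rewrite cross_aff. fold a b c. apply Rmult_integral in Hz. destruct Hz; [contradiction|auto]. Qed.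

Definition n2 (p : pt) := fst p ^ 2 + snd p ^ 2.

Lemma sq_pos x : x <> 0 -> 0 < x^2.
Proof. intros H. destruct (Rtotal_order x 0) as [h|[h|h]]; [nra|contradiction|nra]. Qed.

Lemma pt_neq_n2 (p q : pt) : p <> q -> 0 < (fst p - fst q)^2 + (snd p - snd q)^2.
Proof. destruct p as [a b], q as [c d]; cbn [fst snd]; intros H.
  destruct (Req_dec a c) as [E1|E1]; destruct (Req_dec b d) as [E2|E2].
  - subst; exfalso; apply H; reflexivity.
  - assert (0 < (b-d)^2) by (apply sq_pos; lra). nra.
  - assert (0 < (a-c)^2) by (apply sq_pos; lra). nra.
  - assert (0 < (a-c)^2) by (apply sq_pos; lra). nra. Qed.

Lemma circ_disk_dot v P : on_circle v -> in_disk P -> dot v P < 1.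
Proof. unfold on_circle, in_disk, dot; destruct v as [a b], P as [c d]; cbn [fst snd]; intros H1 H2.
  assert (0 <= (a*d - b*c)^2) by apply pow2_ge_0.
  assert ((a*c+b*d)^2 + (a*d-b*c)^2 = (a^2+b^2)*(c^2+d^2)) by ring.
  assert ((a*c+b*d)^2 < 1) by nra. nra. Qed.

Lemma circ_disk_neq v P : on_circle v -> in_disk P -> P <> v.
Proof. intros H1 H2 E; subst. unfold on_circle, in_disk in *; lra. Qed.

Lemma chord_in_disk v w t : on_circle v -> on_circle w -> w <> v ->
  in_disk (fst v + t * (fst w - fst v), snd v + t * (snd w - snd v)) -> 0 < t < 1.
Proof. intros Hv Hw Hne Hd. pose proof (pt_neq_n2 _ _ Hne) as Q.
  unfold on_circle, in_disk in *; destruct v as [a b], w as [c d]; cbn [fst snd] in *.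
  assert (E : (a + t * (c - a)) ^ 2 + (b + t * (d - b)) ^ 2 = 1 - t*(1-t)*((c-a)^2+(d-b)^2)) by nra.
  assert (0 < t * (1-t) * ((c-a)^2+(d-b)^2)) by lra.
  assert (0 < t * (1-t)) by (apply (Rmult_lt_reg_r ((c-a)^2+(d-b)^2)); lra).
  destruct (Rlt_or_le 0 t); [|nra]. split; auto. nra. Qed.

Definition tau (P v : pt) := 2 * (1 - dot v P) / ((fst P - fst v)^2 + (snd P - snd v)^2).
Definition sig (P v : pt) : pt := (fst v + tau P v * (fst P - fst v), snd v + tau P v * (snd P - snd v)).

Lemma tau_pos P v : on_circle v -> in_disk P -> 0 < tau P v.
Proof. intros. unfold tau. pose proof (circ_disk_dot v P H H0). pose proof (pt_neq_n2 _ _ (circ_disk_neq v P H H0)).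
  apply Rdiv_lt_0_compat; lra. Qed.

Lemma sig_circle P v : on_circle v -> in_disk P -> on_circle (sig P v).
Proof. intros Hv HP. pose proof (pt_neq_n2 _ _ (circ_disk_neq v P Hv HP)) as Q.
  unfold on_circle, sig, tau, dot in *; destruct v as [a b], P as [c d]; cbn [fst snd] in *.
  set (D := (c - a) ^ 2 + (d - b) ^ 2) in *.
  set (T := 2 * (1 - (a * c + b * d)) / D).
  assert (ET : T * D = 2 * (1 - (a*c+b*d))) by (unfold T; field; lra).
  assert (E : (a + T * (c - a)) ^ 2 + (b + T * (d - b)) ^ 2 = (a^2+b^2) + T * (T * D - 2 * (1 - (a*c+b*d))) + 2*T*(1 - (a^2+b^2))) by (unfold D; ring).
  rewrite E, ET, Hv. ring. Qed.

Lemma sig_neq P v : on_circle v -> in_disk P -> sig P v <> v.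
Proof. intros Hv HP E. pose proof (tau_pos P v Hv HP). pose proof (circ_disk_neq v P Hv HP) as N.
  apply N. unfold sig in E. destruct v as [a b], P as [c d]; cbn [fst snd] in *. injection E; intros E1 E2.
  f_equal; nra. Qed.

Lemma cross_sig P v u : cross v (sig P v) u = tau P v * cross v P u.
Proof. unfold cross, sig; cbn [fst snd]; ring. Qed.

Lemma P_on_sig P v : on_circle v -> in_disk P ->
  P = (fst v + / tau P v * (fst (sig P v) - fst v), snd v + / tau P v * (snd (sig P v) - snd v)).
Proof. intros Hv HP. pose proof (tau_pos P v Hv HP). destruct P as [c d]; unfold sig; simpl. f_equal; field; lra. Qed.

Lemma psi_rel_sig (B : pt -> Prop) P v : on_circle v -> in_disk P -> B P ->
  (forall u, B u -> 0 <= cross v P u) -> psi_rel B v (sig P v).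
Proof. intros Hv HP HB H. split; [apply sig_circle; auto|]. split; [apply sig_neq; auto|]. split.
  - exists P, (/ tau P v). split; auto. apply P_on_sig; auto.
  - intros u Hu. rewrite cross_sig. apply Rmult_le_pos; [left; apply tau_pos; auto| auto]. Qed.

Lemma circle_collinear v w1 w2 : on_circle v -> on_circle w1 -> on_circle w2 -> w1 <> v -> w2 <> v ->
  cross v w1 w2 = 0 -> w1 = w2.
Proof. intros Hv H1 H2 N1 N2 C. pose proof (pt_neq_n2 _ _ N1) as Q.
  unfold on_circle, cross in *; destruct v as [a b], w1 as [c d], w2 as [e f]; cbn [fst snd] in *.
  set (D := (c - a) ^ 2 + (d - b) ^ 2) in *.
  set (mu := ((c-a)*(e-a) + (d-b)*(f-b)) / D).
  assert (I1 : (e-a)*D - ((c-a)*(e-a)+(d-b)*(f-b))*(c-a) = -(d-b)*((c-a)*(f-b)-(d-b)*(e-a))) by (unfold D; ring).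
  assert (I2 : (f-b)*D - ((c-a)*(e-a)+(d-b)*(f-b))*(d-b) = (c-a)*((c-a)*(f-b)-(d-b)*(e-a))) by (unfold D; ring).
  rewrite C in I1, I2.
  assert (Ex : e - a = mu * (c - a)).
  { unfold mu. apply (Rmult_eq_reg_r D); [|lra].
    replace (((c - a) * (e - a) + (d - b) * (f - b)) / D * (c - a) * D) with (((c - a) * (e - a) + (d - b) * (f - b)) * (c - a)) by (field; lra). lra. }
  assert (Ey : f - b = mu * (d - b)).
  { unfold mu. apply (Rmult_eq_reg_r D); [|lra].
    replace (((c - a) * (e - a) + (d - b) * (f - b)) / D * (d - b) * D) with (((c - a) * (e - a) + (d - b) * (f - b)) * (d - b)) by (field; lra). lra. }
  assert (Hmu0 : mu <> 0). { intro Z. rewrite Z in Ex, Ey. apply N2. f_equal; lra. }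
  assert (K1 : 2 * (a*(c-a) + b*(d-b)) + D = 0) by (unfold D; nra).
  assert (K2 : mu * (2 * (a*(c-a) + b*(d-b)) + mu * D) = 0).
  { replace e with (a + mu*(c-a)) in H2 by lra. replace f with (b + mu*(d-b)) in H2 by lra. unfold D; nra. }
  apply Rmult_integral in K2. destruct K2 as [K2|K2]; [contradiction|].
  assert (K3 : (mu-1)*D = 0) by lra. apply Rmult_integral in K3. destruct K3 as [K3|K3]; [|lra].
  assert (mu = 1) by lra. rewrite H in Ex, Ey. f_equal; lra. Qed.

Lemma psi_rel_unique (B : pt -> Prop) v w1 w2 : on_circle v -> (forall x, B x -> in_disk x) ->
  psi_rel B v w1 -> psi_rel B v w2 -> w1 = w2.
Proof. intros Hv HD [C1 [N1 [[u1 [t1 [Bu1 Eu1]]] L1]]] [C2 [N2 [[u2 [t2 [Bu2 Eu2]]] L2]]].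
  assert (T1 := chord_in_disk v w1 t1 Hv C1 N1 ltac:(rewrite <- Eu1; auto)).
  assert (T2 := chord_in_disk v w2 t2 Hv C2 N2 ltac:(rewrite <- Eu2; auto)).
  specialize (L1 u2 Bu2). specialize (L2 u1 Bu1). subst u1 u2.
  apply circle_collinear with v; auto.
  unfold cross in *; destruct v as [a b], w1 as [c d], w2 as [e f]; cbn [fst snd] in *.
  nra. Qed.

Lemma argmin_sub (S : nat -> Prop) (f : nat -> R) n :
  (exists i, (i < n)%nat /\ S i) -> exists i, (i < n)%nat /\ S i /\ forall j, (j < n)%nat -> S j -> f i <= f j.
Proof. induction n; intros [i [Hi Si]]; [lia|].
  destruct (classic (exists i, (i < n)%nat /\ S i)) as [Ex|Nx].
  - destruct (IHn Ex) as [k [Hk [Sk Mk]]].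
    destruct (classic (S n)) as [Sn|Nn].
    + destruct (Rle_or_lt (f k) (f n)).
      * exists k; repeat split; auto; try lia. intros j Hj Sj. destruct (Nat.eq_dec j n); [subst; auto|apply Mk; auto; lia].
      * exists n; repeat split; auto; try lia. intros j Hj Sj. destruct (Nat.eq_dec j n); [subst; lra|]. pose proof (Mk j ltac:(lia) Sj); lra.
    + exists k; repeat split; auto; try lia. intros j Hj Sj. destruct (Nat.eq_dec j n); [subst; contradiction|apply Mk; auto; lia].
  - assert (i = n) by (destruct (Nat.eq_dec i n); auto; exfalso; apply Nx; exists i; split; auto; lia). subst.
    exists n; repeat split; auto. intros j Hj Sj. destruct (Nat.eq_dec j n); [subst; lra|]. exfalso; apply Nx; exists j; split; auto; lia.
Qed.

Lemma argmax_sub (S : nat -> Prop) (f : nat -> R) n :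
  (exists i, (i < n)%nat /\ S i) -> exists i, (i < n)%nat /\ S i /\ forall j, (j < n)%nat -> S j -> f j <= f i.
Proof. intros H. destruct (argmin_sub S (fun i => - f i) n H) as [i [? [? M]]]. exists i; repeat split; auto.
  intros j Hj Sj; specialize (M j Hj Sj); lra. Qed.

Lemma poly_vertex_B n P B : convex_polygon n P B -> forall i, (i < n)%nat -> B (P i).
Proof. intros [H _] i Hi. apply H. apply vertex_in_hull; auto. Qed.

Lemma poly_cross_nonneg n P B v w : convex_polygon n P B ->
  (forall i, (i < n)%nat -> 0 <= cross v w (P i)) -> forall u, B u -> 0 <= cross v w u.
Proof. intros [H _] Hc u Hu. apply H in Hu. eapply hull_cross_nonneg; eauto. Qed.

Lemma cross_key v P R : on_circle v ->
  cross v P R = (1 - dot v P) * (1 - dot v R) * ((- crs v R) / (1 - dot v R) - (- crs v P) / (1 - dot v P)) \/ dot v P = 1 \/ dot v R = 1.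
Proof. intros Hv. destruct (Req_dec (dot v P) 1); [right; left; auto|]. destruct (Req_dec (dot v R) 1); [right; right; auto|].
  left. unfold cross, dot, crs, on_circle in *. destruct v as [a b], P as [c d], R as [e f]; cbn [fst snd] in *.
  assert (E : c*f - d*e = (a*c+b*d)*(a*f-b*e) - (a*e+b*f)*(a*d-b*c)).
  { transitivity ((a^2+b^2)*(c*f-d*e)); [rewrite Hv; ring| ring]. }
  transitivity (-(1 - (a*c+b*d)) * (a*f-b*e) + (1 - (a*e+b*f)) * (a*d-b*c)).
  - assert (E2 : (c - a) * (f - b) - (d - b) * (e - a) = c*f - d*e + (a*d - b*c) - (a*f - b*e)) by ring.
    rewrite E2, E. ring.
  - field. split; lra. Qed.

Lemma support_vertex n P B v : convex_polygon n P B -> (forall x, B x -> in_disk x) -> (1 <= n)%nat ->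
  on_circle v -> exists k, (k < n)%nat /\ forall i, (i < n)%nat -> 0 <= cross v (P k) (P i).
Proof. intros Hp Hd Hn Hv.
  destruct (argmin_sub (fun _ => True) (fun i => (- crs v (P i)) / (1 - dot v (P i))) n ltac:(exists 0%nat; split; auto; lia)) as [k [Hk [_ M]]].
  exists k; split; auto. intros i Hi.
  assert (D1 := circ_disk_dot v (P k) Hv (Hd _ (poly_vertex_B _ _ _ Hp k Hk))).
  assert (D2 := circ_disk_dot v (P i) Hv (Hd _ (poly_vertex_B _ _ _ Hp i Hi))).
  destruct (cross_key v (P k) (P i) Hv) as [E|[E|E]]; try lra. rewrite E.
  specialize (M i Hi I). apply Rmult_le_pos; [apply Rmult_le_pos; lra| lra]. Qed.

Lemma psi_rel_vertex n P B v k : convex_polygon n P B -> (forall x, B x -> in_disk x) -> (k < n)%nat ->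
  on_circle v -> (forall i, (i < n)%nat -> 0 <= cross v (P k) (P i)) -> psi_rel B v (sig (P k) v).
Proof. intros Hp Hd Hk Hv H. apply psi_rel_sig; auto.
  apply Hd, (poly_vertex_B _ _ _ Hp k Hk). apply (poly_vertex_B _ _ _ Hp k Hk).
  apply (poly_cross_nonneg _ _ _ _ _ Hp H). Qed.

Lemma psi_spec n P B v : convex_polygon n P B -> (forall x, B x -> in_disk x) -> (1 <= n)%nat ->
  on_circle v -> psi_rel B v (psi B v).
Proof. intros Hp Hd Hn Hv. destruct (support_vertex n P B v Hp Hd Hn Hv) as [k [Hk H]].
  unfold psi. apply epsilon_spec. exists (sig (P k) v). eapply psi_rel_vertex; eauto. Qed.

Lemma psi_eq_sig n P B v k : convex_polygon n P B -> (forall x, B x -> in_disk x) -> (k < n)%nat ->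
  on_circle v -> (forall i, (i < n)%nat -> 0 <= cross v (P k) (P i)) -> psi B v = sig (P k) v.
Proof. intros Hp Hd Hk Hv H. apply (psi_rel_unique B v); auto.
  apply (psi_spec n P); auto; lia. eapply psi_rel_vertex; eauto. Qed.

Lemma cont_eps f x : continuity_pt f x -> forall eps, 0 < eps -> exists d, 0 < d /\ forall y, Rabs (y - x) < d -> Rabs (f y - f x) < eps.
Proof. intros H eps He. destruct (H eps He) as [d [Hd Hy]]. exists d; split; auto. intros y Hyd.
  destruct (Req_dec y x). subst. rewrite Rminus_diag, Rabs_R0; auto.
  apply (Hy y). split; [split; [exact I| auto]| exact Hyd]. Qed.

Lemma IVT2 f a b : continuity f -> f a * f b <= 0 -> exists z, f z = 0.
Proof. intros Hc Hs. destruct (Rle_dec a b).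
  - destruct (IVT_cor f a b Hc r Hs) as [z [_ Hz]]; eauto.
  - destruct (IVT_cor f b a Hc ltac:(lra) ltac:(rewrite Rmult_comm; auto)) as [z [_ Hz]]; eauto. Qed.

Lemma e_circle t : on_circle (e t).
Proof. unfold on_circle, e; cbn [fst snd]. rewrite <- (sin2_cos2 (2*PI*t)). unfold Rsqr; ring. Qed.

Lemma e_shift_nat t N : e (t + INR N) = e t.
Proof. unfold e. replace (2 * PI * (t + INR N)) with (2 * PI * t + 2 * INR N * PI) by ring.
  rewrite cos_period, sin_period; auto. Qed.

Lemma e_shift t k : e (t + IZR k) = e t.
Proof. destruct (Z_le_gt_dec 0 k).
  - replace k with (Z.of_nat (Z.to_nat k)) by lia. rewrite <- INR_IZR_INZ. apply e_shift_nat.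
  - set (N := Z.to_nat (- k)). assert (IZR k = - INR N) by (unfold N; rewrite INR_IZR_INZ, <- opp_IZR; f_equal; lia).
    rewrite H. rewrite <- (e_shift_nat (t + - INR N) N). f_equal; ring. Qed.

Lemma e_eq x y : e x = e y -> exists k, x = y + IZR k.
Proof. unfold e; intros E. injection E; intros Es Ec.
  assert (C : cos (2 * (PI * (x - y))) = 1).
  { replace (2 * (PI * (x - y))) with (2*PI*x - 2*PI*y) by ring. rewrite cos_minus, Ec, Es.
    rewrite <- (sin2_cos2 (2*PI*y)). unfold Rsqr; ring. }
  rewrite cos_2a_sin in C. assert (S : sin (PI * (x - y)) = 0) by nra.
  destruct (sin_eq_0_0 _ S) as [k Hk]. exists k. pose proof PI_RGT_0.
  apply (Rmult_eq_reg_l PI); [|lra]. lra. Qed.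

Lemma psi_circle n P B v : convex_polygon n P B -> (forall x, B x -> in_disk x) -> (1 <= n)%nat ->
  on_circle v -> on_circle (psi B v) /\ psi B v <> v.
Proof. intros. destruct (psi_spec n P B v) as [? [? _]]; auto. Qed.

Lemma int_between k : 0 < IZR k < 1 -> False.
Proof. intros [H1 H2]. apply lt_IZR in H1. apply lt_IZR in H2. lia. Qed.

Lemma lift_props (f : pt -> pt) F : is_lift f F -> (forall t, f (e t) <> e t) ->
  (forall t, t < F t < t + 1) /\ (forall t, F (t + 1) = F t + 1).
Proof. intros [Hc [He H0]] Hn.
  assert (NI : forall t k, F t - t <> IZR k).
  { intros t k E. apply (Hn t). rewrite <- He. replace (F t) with (t + IZR k) by lra. apply e_shift. }
  assert (G0 : 0 < F 0 < 1). { split; [|lra]. destruct H0 as [[H0|H0] _]; auto. exfalso; apply (NI 0 0%Z). rewrite <- H0; ring. }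
  assert (Cg : forall c, continuity (fun t => F t - t - c)).
  { intros c. apply continuity_minus; [apply continuity_minus; [auto| apply derivable_continuous, derivable_id]| apply continuity_const; intros ? ?; auto]. }
  assert (B1 : forall t, t < F t < t + 1).
  { intros t. split.
    - destruct (Rlt_or_le t (F t)); auto. exfalso.
      destruct (IVT2 _ 0 t (Cg 0) ltac:(nra)) as [z Hz]. apply (NI z 0%Z). lra.
    - destruct (Rlt_or_le (F t) (t+1)); auto. exfalso.
      destruct (IVT2 _ 0 t (Cg 1) ltac:(nra)) as [z Hz]. apply (NI z 1%Z). lra. }
  split; auto. intros t.
  assert (E : e (F (t+1)) = e (F t)). { rewrite !He. f_equal. apply (e_shift t 1%Z). }
  destruct (e_eq _ _ E) as [k Hk]. pose proof (B1 t). pose proof (B1 (t+1)).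
  assert (IZR k = 1). { assert (Hk2 : 0 < IZR k < 2) by lra. destruct Hk2 as [Ha Hb]. apply lt_IZR in Ha. apply lt_IZR in Hb.
    assert (k = 1%Z) by lia. subst; auto. }
  lra. Qed.

Lemma iter_shift_nat F : (forall t, F (t + 1) = F t + 1) -> forall m N t, Nat.iter m F (t + INR N) = Nat.iter m F t + INR N.
Proof. intros H m. induction m; intros N t; [reflexivity|]. simpl. rewrite IHm.
  clear IHm. generalize (Nat.iter m F t). intros x. induction N; [simpl; rewrite !Rplus_0_r; auto|].
  rewrite S_INR. replace (x + (INR N + 1)) with ((x + INR N) + 1) by ring. rewrite H, IHN; ring. Qed.

Lemma iter_shift F : (forall t, F (t + 1) = F t + 1) -> forall m k t, Nat.iter m F (t + IZR k) = Nat.iter m F t + IZR k.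
Proof. intros H m k t. destruct (Z_le_gt_dec 0 k).
  - replace k with (Z.of_nat (Z.to_nat k)) by lia. rewrite <- INR_IZR_INZ. apply iter_shift_nat; auto.
  - set (N := Z.to_nat (- k)). assert (IZR k = - INR N) by (unfold N; rewrite INR_IZR_INZ, <- opp_IZR; f_equal; lia).
    rewrite H0. pose proof (iter_shift_nat F H m N (t - INR N)). replace (t - INR N + INR N) with t in H1 by ring.
    replace (t + - INR N) with (t - INR N) by ring. lra. Qed.

Lemma iter_cont F : continuity F -> forall m, continuity (fun x => Nat.iter m F x).
Proof. intros H m. induction m; simpl. apply derivable_continuous, derivable_id.
  apply (continuity_comp (fun x => Nat.iter m F x) F); auto. Qed.

Lemma e_iter (f : pt -> pt) F : (forall t, e (F t) = f (e t)) -> forall m t, e (Nat.iter m F t) = Nat.iter m f (e t).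
Proof. intros H m; induction m; intros t; simpl; auto. rewrite H, IHm; auto. Qed.

Lemma iter_mul_lb F q p m0 : (forall z, Nat.iter q F z >= z + p + m0) ->
  forall m x, Nat.iter (q * m) F x >= x + INR m * (p + m0).
Proof. intros H m; induction m; intros x. rewrite Nat.mul_0_r; simpl; lra.
  replace (q * S m)%nat with (q + q * m)%nat by lia. rewrite Nat.iter_add. specialize (IHm x). specialize (H (Nat.iter (q * m) F x)).
  rewrite S_INR. lra. Qed.

Lemma iter_mul_ub F q p m0 : (forall z, Nat.iter q F z <= z + p - m0) ->
  forall m x, Nat.iter (q * m) F x <= x + INR m * (p - m0).
Proof. intros H m; induction m; intros x. rewrite Nat.mul_0_r; simpl; lra.
  replace (q * S m)%nat with (q + q * m)%nat by lia. rewrite Nat.iter_add. specialize (IHm x). specialize (H (Nat.iter (q * m) F x)).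
  rewrite S_INR. lra. Qed.

Lemma rot_contra_lb F q p m0 r : (0 < q)%nat -> 0 < m0 -> r = p / INR q ->
  (forall z, Nat.iter q F z >= z + p + m0) -> Un_cv (fun n => (Nat.iter n F 0 - 0) / INR n) r -> False.
Proof. intros Hq Hm Hr H Hc. assert (Qp : 0 < INR q) by (apply lt_0_INR; lia).
  destruct (Hc (m0 / INR q) ltac:(apply Rdiv_lt_0_compat; lra)) as [N HN].
  specialize (HN (q * S N)%nat ltac:(nia)). unfold Rdist in HN.
  pose proof (iter_mul_lb F q p m0 H (S N) 0). rewrite mult_INR in HN.
  assert (SN : 0 < INR (S N)) by (apply lt_0_INR; lia).
  assert (E : (Nat.iter (q * S N) F 0 - 0) / (INR q * INR (S N)) - r >= m0 / INR q).
  { rewrite Hr. apply Rle_ge. apply (Rmult_le_reg_r (INR q * INR (S N))). nra.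
    replace ((m0 / INR q) * (INR q * INR (S N))) with (m0 * INR (S N)) by (field; lra).
    replace (((Nat.iter (q * S N) F 0 - 0) / (INR q * INR (S N)) - p / INR q) * (INR q * INR (S N)))
      with (Nat.iter (q * S N) F 0 - p * INR (S N)) by (field; lra). lra. }
  assert (Hab := Rle_abs ((Nat.iter (q * S N) F 0 - 0) / (INR q * INR (S N)) - r)). lra. Qed.

Lemma rot_contra_ub F q p m0 r : (0 < q)%nat -> 0 < m0 -> r = p / INR q ->
  (forall z, Nat.iter q F z <= z + p - m0) -> Un_cv (fun n => (Nat.iter n F 0 - 0) / INR n) r -> False.
Proof. intros Hq Hm Hr H Hc. assert (Qp : 0 < INR q) by (apply lt_0_INR; lia).
  destruct (Hc (m0 / INR q) ltac:(apply Rdiv_lt_0_compat; lra)) as [N HN].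
  specialize (HN (q * S N)%nat ltac:(nia)). unfold Rdist in HN.
  pose proof (iter_mul_ub F q p m0 H (S N) 0). rewrite mult_INR in HN.
  assert (SN : 0 < INR (S N)) by (apply lt_0_INR; lia).
  assert (E : r - (Nat.iter (q * S N) F 0 - 0) / (INR q * INR (S N)) >= m0 / INR q).
  { rewrite Hr. apply Rle_ge. apply (Rmult_le_reg_r (INR q * INR (S N))). nra.
    replace ((m0 / INR q) * (INR q * INR (S N))) with (m0 * INR (S N)) by (field; lra).
    replace ((p / INR q - (Nat.iter (q * S N) F 0 - 0) / (INR q * INR (S N))) * (INR q * INR (S N)))
      with (p * INR (S N) - Nat.iter (q * S N) F 0) by (field; lra). lra. }
  assert (Hab := Rabs_Ropp ((Nat.iter (q * S N) F 0 - 0) / (INR q * INR (S N)) - r)); assert (Hab2 := Rle_abs (- ((Nat.iter (q * S N) F 0 - 0) / (INR q * INR (S N)) - r))). lra. Qed.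

Lemma periodic_point F q p r : (0 < q)%nat -> r = p / INR q -> continuity F -> (forall t, F (t + 1) = F t + 1) ->
  Un_cv (fun n => (Nat.iter n F 0 - 0) / INR n) r -> exists x0, Nat.iter q F x0 = x0 + p.
Proof. intros Hq Hr Hc Hs Hcv. apply NNPP; intros Hno.
  set (g := fun x => Nat.iter q F x - x - p).
  assert (Gc : continuity g).
  { unfold g. apply continuity_minus; [apply continuity_minus; [apply iter_cont; auto| apply derivable_continuous, derivable_id]| apply continuity_const; intros ? ?; auto]. }
  assert (Gn : forall x, g x <> 0). { intros x E. apply Hno. exists x. unfold g in E; lra. }
  assert (Gp : forall x k, g (x + IZR k) = g x). { intros x k. unfold g. rewrite iter_shift; auto. ring. }
  assert (Red : forall x, exists y, 0 <= y <= 1 /\ g x = g y).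
  { intros x. destruct (archimed x) as [A1 A2]. exists (x - IZR (up x - 1)%Z). split.
    rewrite minus_IZR; simpl; lra. rewrite <- (Gp (x - IZR (up x - 1)%Z) (up x - 1)%Z). f_equal; ring. }
  assert (Gcp : forall c, continuity_pt g c) by (intros; apply Gc).
  destruct (Rlt_or_le 0 (g 0)) as [G0|G0].
  - assert (Pos : forall x, 0 < g x).
    { intros x. destruct (Rlt_or_le 0 (g x)); auto. exfalso. assert (HH : g 0 * g x <= 0) by (clearbody g; nra); destruct (IVT2 g 0 x Gc HH) as [z Hz]. apply (Gn z Hz). }
    destruct (continuity_ab_min g 0 1 ltac:(lra) (fun c _ => Gcp c)) as [xm [Hm Hxm]].
    apply (rot_contra_lb F q p (g xm) r Hq (Pos xm) Hr); auto.
    intros z. destruct (Red z) as [y [Hy Ey]]. specialize (Hm y Hy). replace (Nat.iter q F z) with (g z + z + p) by (unfold g; ring). lra.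
  - assert (Neg : forall x, g x < 0).
    { intros x. destruct (Rlt_or_le (g x) 0); auto. exfalso. assert (HH : g 0 * g x <= 0) by (clearbody g; nra); destruct (IVT2 g 0 x Gc HH) as [z Hz]. apply (Gn z Hz). }
    assert (G0' : g 0 < 0) by auto.
    destruct (continuity_ab_maj g 0 1 ltac:(lra) (fun c _ => Gcp c)) as [xm [Hm Hxm]].
    apply (rot_contra_ub F q p (- g xm) r Hq ltac:(pose proof (Neg xm); lra) Hr); auto.
    intros z. destruct (Red z) as [y [Hy Ey]]. specialize (Hm y Hy). replace (Nat.iter q F z) with (g z + z + p) by (unfold g; ring). lra.
Qed.

Lemma rot_add a b z : rot a (rot b z) = rot (a + b) z.
Proof. unfold rot; cbn [fst snd]. rewrite cos_plus, sin_plus. f_equal; ring. Qed.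

Lemma rot_0 z : rot 0 z = z.
Proof. unfold rot. rewrite cos_0, sin_0. destruct z; cbn [fst snd]; f_equal; ring. Qed.

Lemma rot_fix b z : on_circle z -> rot b z = z -> forall y, rot b y = y.
Proof. unfold rot, on_circle; destruct z as [x y]; cbn [fst snd]; intros Hc E. injection E; intros E2 E1.
  assert (S2 := sin2_cos2 b). unfold Rsqr in S2.
  assert (K1 : (cos b - 1) * x - sin b * y = 0) by lra.
  assert (K2 : sin b * x + (cos b - 1) * y = 0) by lra.
  assert (K : ((cos b - 1)^2 + (sin b)^2) * (x^2 + y^2) = 0).
  { replace (((cos b - 1)^2 + (sin b)^2) * (x^2 + y^2)) with (((cos b - 1) * x - sin b * y)^2 + (sin b * x + (cos b - 1) * y)^2) by ring.
    rewrite K1, K2; ring. }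
  rewrite Hc in K. assert (Z : (cos b - 1)^2 + (sin b)^2 = 0) by lra.
  assert (sin b = 0) by nra. assert (cos b = 1) by nra.
  intros [u w]. cbn [fst snd]. rewrite H, H0. f_equal; ring. Qed.

Lemma conj_iter (f h : pt -> pt) a : (forall x, on_circle x -> on_circle (f x)) ->
  (forall x, on_circle x -> h (f x) = rot a (h x)) ->
  forall m x, on_circle x -> h (Nat.iter m f x) = rot (INR m * a) (h x) /\ on_circle (Nat.iter m f x).
Proof. intros Hf Hh m; induction m; intros x Hx. simpl. rewrite Rmult_0_l, rot_0; auto.
  destruct (IHm x Hx) as [I1 I2]. change (Nat.iter (S m) f x) with (f (Nat.iter m f x)). rewrite Hh by auto. rewrite I1, rot_add. split; auto.
  f_equal. rewrite S_INR; ring. Qed.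

Lemma finite_order2 (f : pt -> pt) F q pz : (forall x, on_circle x -> on_circle (f x)) ->
  (forall t, e (F t) = f (e t)) -> conj_to_rotation f -> (exists x0, Nat.iter q F x0 = x0 + IZR pz) ->
  forall t, Nat.iter q f (e t) = e t.
Proof. intros Hf Hl [h [a [[Hh1 [_ [g [_ [_ [Hgh _]]]]]] Hc]]] [x0 Hx0] t.
  assert (P0 : Nat.iter q f (e x0) = e x0). { rewrite <- (e_iter f F Hl). rewrite Hx0. apply e_shift. }
  destruct (conj_iter f h a Hf Hc q (e x0) (e_circle x0)) as [C1 _]. rewrite P0 in C1.
  assert (R := rot_fix _ _ (Hh1 _ (e_circle x0)) (eq_sym C1)).
  destruct (conj_iter f h a Hf Hc q (e t) (e_circle t)) as [C2 C3]. rewrite R in C2.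
  rewrite <- (Hgh _ C3), C2. apply Hgh, e_circle. Qed.

Definition hx (t : R) : pt := (cos (PI * t), sin (PI * t)).
Definition vv (y : pt) : pt := ((fst y ^ 2 - snd y ^ 2) / n2 y, 2 * fst y * snd y / n2 y).

Lemma hx_n2 t : n2 (hx t) = 1.
Proof. unfold n2, hx; cbn [fst snd]. rewrite <- (sin2_cos2 (PI*t)). unfold Rsqr; ring. Qed.

Lemma e_vv t : e t = vv (hx t).
Proof. unfold e, vv. rewrite hx_n2. unfold hx; cbn [fst snd].
  replace (2 * PI * t) with (2 * (PI * t)) by ring. rewrite cos_2a, sin_2a. f_equal; field. Qed.

Lemma crs_hx a b : crs (hx a) (hx b) = sin (PI * (b - a)).
Proof. unfold crs, hx; cbn [fst snd]. replace (PI * (b - a)) with (PI * b - PI * a) by ring. rewrite sin_minus. ring. Qed.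

Definition mat := (R * R * R * R)%type.
Definition app (M : mat) (y : pt) : pt :=
  match M with (a, b, c, d) => (a * fst y + b * snd y, c * fst y + d * snd y) end.
Definition mmul (M N : mat) : mat :=
  match M, N with (a, b, c, d), (a', b', c', d') =>
    (a * a' + b * c', a * b' + b * d', c * a' + d * c', c * b' + d * d') end.
Definition det (M : mat) : R := match M with (a, b, c, d) => a * d - b * c end.
Definition mid : mat := (1, 0, 0, 1).
Definition MP (P : pt) : mat := (snd P, - (1 + fst P), 1 - fst P, - snd P).
Definition Dv (M : mat) (y : pt) : R := det M * n2 y / n2 (app M y).

Lemma app_mul M N y : app (mmul M N) y = app M (app N y).
Proof. destruct M as [[[a b] c] d], N as [[[a' b'] c'] d']; unfold app, mmul; cbn [fst snd]; f_equal; ring. Qed.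
Lemma det_mul M N : det (mmul M N) = det M * det N.
Proof. destruct M as [[[a b] c] d], N as [[[a' b'] c'] d']; unfold det, mmul; ring. Qed.
Lemma app_id y : app mid y = y.
Proof. destruct y; unfold app, mid; cbn [fst snd]; f_equal; ring. Qed.
Lemma crs_app M x y : crs (app M x) (app M y) = det M * crs x y.
Proof. destruct M as [[[a b] c] d]; unfold crs, app, det; cbn [fst snd]; ring. Qed.
Lemma det_MP P : det (MP P) = 1 - n2 P.
Proof. unfold det, MP, n2; ring. Qed.

Lemma n2_nonneg y : 0 <= n2 y.
Proof. unfold n2. pose proof (pow2_ge_0 (fst y)). pose proof (pow2_ge_0 (snd y)). lra. Qed.

Lemma n2_pos y : y <> (0,0) -> 0 < n2 y.
Proof. intros H. pose proof (pt_neq_n2 y (0,0) H). unfold n2. cbn [fst snd] in H0. rewrite !Rminus_0_r in H0. auto. Qed.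

Lemma app_nz M y : det M <> 0 -> 0 < n2 y -> 0 < n2 (app M y).
Proof. intros Hd Hy. apply n2_pos. intros E. destruct M as [[[a b] c] d], y as [y0 y1]; unfold app, det, n2 in *; cbn [fst snd] in *.
  injection E; intros E2 E1. 
  assert (K1 : (a*d - b*c) * y0 = 0). { replace ((a*d - b*c) * y0) with (d * (a*y0+b*y1) - b * (c*y0+d*y1)) by ring. rewrite E1, E2; ring. }
  assert (K2 : (a*d - b*c) * y1 = 0). { replace ((a*d - b*c) * y1) with (a * (c*y0+d*y1) - c * (a*y0+b*y1)) by ring. rewrite E1, E2; ring. }
  apply Rmult_integral in K1; apply Rmult_integral in K2. destruct K1 as [K1|K1]; [contradiction|]. destruct K2 as [K2|K2]; [contradiction|].
  subst. lra. Qed.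

Lemma crs_trans a b c : 0 < n2 b -> crs a b = 0 -> crs b c = 0 -> crs a c = 0.
Proof. unfold crs, n2; destruct a as [a0 a1], b as [b0 b1], c as [c0 c1]; cbn [fst snd]; intros Hb H1 H2.
  assert (K : (a0 * c1 - a1 * c0) * (b0^2 + b1^2) = 0).
  { replace ((a0 * c1 - a1 * c0) * (b0^2 + b1^2)) with ((a0 * b1 - a1 * b0) * (b0 * c0 + b1 * c1) + (b0 * c1 - b1 * c0) * (a0*b0 + a1*b1)) by ring.
    rewrite H1, H2; ring. }
  apply Rmult_integral in K. destruct K; lra. Qed.

Lemma crs_anti a b : crs a b = - crs b a.
Proof. unfold crs; ring. Qed.

Lemma vv_eq y z : 0 < n2 y -> 0 < n2 z -> vv y = vv z -> crs y z = 0.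
Proof. unfold vv, crs, n2; destruct y as [a b], z as [c d]; cbn [fst snd]; intros Hy Hz E.
  assert (E1 := f_equal fst E). assert (E2 := f_equal snd E). cbn [fst snd] in E1, E2.
  set (Y := a^2+b^2) in *. set (Z := c^2+d^2) in *.
  assert (F1 : (a^2 - b^2) * Z = (c^2 - d^2) * Y).
  { assert (X1: (a^2-b^2) = ((a^2-b^2)/Y)*Y) by (field; lra). assert (X2: (c^2-d^2) = ((c^2-d^2)/Z)*Z) by (field; lra).
    rewrite X1, X2, E1. ring. }
  assert (F2 : (2*a*b) * Z = (2*c*d) * Y).
  { assert (X1: (2*a*b) = ((2*a*b)/Y)*Y) by (field; lra). assert (X2: (2*c*d) = ((2*c*d)/Z)*Z) by (field; lra).
    rewrite X1, X2, E2. ring. }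
  assert (K : 2 * (a*d - b*c)^2 = Y * Z - ((a^2-b^2)*(c^2-d^2) + (2*a*b)*(2*c*d))) by (unfold Y, Z; ring).
  assert (K2 : ((a^2-b^2)*(c^2-d^2) + (2*a*b)*(2*c*d)) * Y = Y * Y * Z).
  { transitivity (((a^2-b^2)*((c^2-d^2)*Y) + (2*a*b)*((2*c*d)*Y))); [ring|]. rewrite <- F1, <- F2.
    replace (Y*Y*Z) with (((a^2-b^2)^2 + (2*a*b)^2) * Z) by (unfold Y; ring). ring. }
  assert (K3 : ((a^2-b^2)*(c^2-d^2) + (2*a*b)*(2*c*d)) = Y * Z) by (apply (Rmult_eq_reg_r Y); [lra|lra]).
  assert ((a*d-b*c)^2 = 0) by lra. nra. Qed.

Lemma sig_vv P y : n2 y = 1 -> in_disk P -> sig P (vv y) = vv (app (MP P) y).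
Proof. intros Hy HP.
  assert (Hv : on_circle (vv y)). { unfold on_circle, vv; rewrite Hy, !Rdiv_1_r. unfold n2 in Hy; destruct y as [a b]; cbn [fst snd] in *. 
    transitivity ((a^2+b^2)^2); [ring| rewrite Hy; ring]. }
  assert (Hd : 0 < n2 (app (MP P) y)). { apply app_nz. rewrite det_MP. unfold in_disk, n2 in *; lra. lra. }
  pose proof (pt_neq_n2 _ _ (circ_disk_neq _ P Hv HP)) as Q.
  unfold sig, tau, vv, MP, app, n2, dot, in_disk in *; destruct y as [a b], P as [c d]; cbn [fst snd] in *.
  rewrite Hy, !Rdiv_1_r in Q.
  f_equal; field; rewrite Hy, !Rmult_1_r; repeat split; lra. Qed.

Lemma cross_vv x y z : n2 x = 1 -> n2 y = 1 -> n2 z = 1 ->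
  cross (vv x) (vv y) (vv z) = -4 * crs x y * crs y z * crs z x.
Proof. intros Hx Hy Hz. unfold vv. rewrite Hx, Hy, Hz, !Rdiv_1_r. unfold n2 in *.
  destruct x as [a b], y as [c d], z as [e f]; unfold cross, crs; cbn [fst snd] in *.
  transitivity (2 * ((a*d-b*c)*(a*c+b*d)*(e^2+f^2) + (c*f-d*e)*(c*e+d*f)*(a^2+b^2) + (e*b-f*a)*(e*a+f*b)*(c^2+d^2))).
  rewrite Hx, Hy, Hz; ring. ring. Qed.

Lemma MP_chord y w l : n2 y = 1 ->
  app (MP (fst (vv y) + l * (fst w - fst (vv y)), snd (vv y) + l * (snd w - snd (vv y)))) y = 
  (l * fst (app (MP w) y), l * snd (app (MP w) y)).
Proof. intros Hy. unfold vv, MP, app. rewrite Hy, !Rdiv_1_r. unfold n2 in Hy. destruct y as [a b], w as [c d]; cbn [fst snd] in *.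
  f_equal.
  - transitivity (l * (d * a + - (1 + c) * b) + (1 - l) * (b * (2*a*a - (1 + (a^2 - b^2))))); [ring|]. replace (1 + (a^2-b^2)) with (2*a*a) by (replace (2*a*a) with (2*a^2) by ring; lra). ring.
  - transitivity (l * ((1 - c) * a + - d * b) + (1 - l) * (a * (1 - (a^2 - b^2)) - 2 * a * b * b)); [ring|]. replace (1 - (a^2-b^2)) with (2*b*b) by (replace (2*b*b) with (2*b^2) by ring; lra). ring.
Qed.

Lemma det_chord v w l : on_circle v -> on_circle w ->
  det (MP (fst v + l * (fst w - fst v), snd v + l * (snd w - snd v))) = l * (1 - l) * ((fst w - fst v)^2 + (snd w - snd v)^2).
Proof. intros Hv Hw. rewrite det_MP. unfold n2, on_circle in *. destruct v as [a b], w as [c d]; cbn [fst snd] in *.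
  transitivity (l*(1-l)*((c-a)^2+(d-b)^2) + (1-l)*(1-(a^2+b^2)) + l*(1-(c^2+d^2))); [ring| rewrite Hv, Hw; ring]. Qed.

Lemma n2_scale l p : n2 (l * fst p, l * snd p) = l^2 * n2 p.
Proof. unfold n2; cbn [fst snd]; ring. Qed.

Lemma Dv_mul G M y : 0 < n2 y -> 0 < n2 (app M y) -> 0 < n2 (app G (app M y)) ->
  Dv (mmul G M) y = Dv G (app M y) * Dv M y.
Proof. intros. unfold Dv. rewrite det_mul, app_mul. field. split; lra. Qed.

Lemma Dv_id y : 0 < n2 y -> Dv mid y = 1.
Proof. intros. unfold Dv. rewrite app_id. unfold det, mid. field. lra. Qed.

Lemma par_scale y z : 0 < n2 y -> crs y z = 0 -> z = ((fst y * fst z + snd y * snd z)/n2 y * fst y, (fst y * fst z + snd y * snd z)/n2 y * snd y).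
Proof. unfold crs, n2; destruct y as [a b], z as [c d]; cbn [fst snd]; intros H C. f_equal.
  - apply (Rmult_eq_reg_r (a^2+b^2)); [|lra]. field_simplify; [|lra]. 
    replace (c * a^2 + c * b^2) with (a*(a*c + b*d) - b * (a*d - b*c)) by ring. rewrite C. ring.
  - apply (Rmult_eq_reg_r (a^2+b^2)); [|lra]. field_simplify; [|lra].
    replace (d * a^2 + d * b^2) with (b*(a*c + b*d) + a * (a*d - b*c)) by ring. rewrite C. ring.
Qed.

Lemma app_scale M l y : app M (l * fst y, l * snd y) = (l * fst (app M y), l * snd (app M y)).
Proof. destruct M as [[[a b] c] d]; unfold app; cbn [fst snd]; f_equal; ring. Qed.

Lemma Dv_par G y z : 0 < n2 y -> 0 < n2 z -> det G <> 0 -> crs y z = 0 -> Dv G z = Dv G y.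
Proof. intros Hy Hz Hd C. pose proof (par_scale y z Hy C) as Ez. set (l := (fst y * fst z + snd y * snd z) / n2 y) in *.
  clearbody l. subst z. rewrite n2_scale in Hz. assert (0 < l^2) by (destruct (Req_dec l 0) as [E|E]; [rewrite E in Hz; lra| apply sq_pos; auto]).
  assert (0 < n2 (app G y)) by (apply app_nz; auto).
  unfold Dv. rewrite app_scale, !n2_scale. field. split; [lra|]. intro Z; rewrite Z in H; lra. Qed.

Lemma eig G a : 0 < n2 a -> crs a (app G a) = 0 -> app G a = ((fst a * fst (app G a) + snd a * snd (app G a))/n2 a * fst a, (fst a * fst (app G a) + snd a * snd (app G a))/n2 a * snd a).
Proof. intros. apply par_scale; auto. Qed.

Lemma three_dirs G a b c : 0 < det G -> 0 < n2 a -> 0 < n2 b -> 0 < n2 c ->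
  crs a b <> 0 -> crs a c <> 0 -> crs b c <> 0 ->
  crs a (app G a) = 0 -> crs b (app G b) = 0 -> crs c (app G c) = 0 -> Dv G a = 1.
Proof. intros Hd Ha Hb Hc Nab Nac Nbc Ea Eb Ec.
  pose proof (eig G a Ha Ea) as Xa. pose proof (eig G b Hb Eb) as Xb. pose proof (eig G c Hc Ec) as Xc.
  set (al := (fst a * fst (app G a) + snd a * snd (app G a)) / n2 a) in *.
  set (be := (fst b * fst (app G b) + snd b * snd (app G b)) / n2 b) in *.
  set (ga := (fst c * fst (app G c) + snd c * snd (app G c)) / n2 c) in *.
  assert (K : forall x y l m, app G x = (l * fst x, l * snd x) -> app G y = (m * fst y, m * snd y) -> crs x y <> 0 -> det G = l * m).
  { intros x y l m H1 H2 N. pose proof (crs_app G x y) as Q. rewrite H1, H2 in Q. unfold crs in *; cbn [fst snd] in Q.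
    apply (Rmult_eq_reg_r (fst x * snd y - snd x * fst y)); auto. lra. }
  assert (K1 := K a b al be Xa Xb Nab). assert (K2 := K a c al ga Xa Xc Nac). assert (K3 := K b c be ga Xb Xc Nbc).
  assert (al <> 0) by (intro Z; rewrite Z in K1; lra). assert (ga <> 0) by (intro Z; rewrite Z in K2; lra).
  assert (al = be). { apply (Rmult_eq_reg_r ga); auto. lra. }
  unfold Dv. rewrite Xa, n2_scale. rewrite K1, <- H1. field. split; auto. lra. Qed.

Lemma cont_cross_e X Y : continuity (fun t => cross (e t) X Y).
Proof. unfold cross, e; cbn [fst snd]. reg. Qed.

Definition sgn (sg : bool) : R := if sg then 1 else -1.

Lemma fin_delta (C : nat -> R -> Prop) n :
  (forall i, (i < n)%nat -> exists d, 0 < d /\ forall h, 0 <= h < d -> C i h) ->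
  exists d, 0 < d /\ forall h, 0 <= h < d -> forall i, (i < n)%nat -> C i h.
Proof. induction n; intros H. exists 1; split; [lra|]. intros; lia.
  destruct IHn as [d1 [D1 H1]]. intros; apply H; lia. destruct (H n ltac:(lia)) as [d2 [D2 H2]].
  exists (Rmin d1 d2); split. apply Rmin_glb_lt; auto. intros h Hh i Hi.
  pose proof (Rmin_l d1 d2); pose proof (Rmin_r d1 d2).
  destruct (Nat.eq_dec i n). subst; apply H2; lra. apply H1; [lra| lia]. Qed.

Lemma cont_pos f x : continuity f -> 0 < f x -> exists d, 0 < d /\ forall y, Rabs (y - x) < d -> 0 < f y.
Proof. intros Hc Hp. destruct (cont_eps f x (Hc x) (f x) Hp) as [d [Hd H]]. exists d; split; auto.
  intros y Hy. specialize (H y Hy). apply Rabs_def2 in H. lra. Qed.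

Lemma cont_neg f x : continuity f -> f x < 0 -> exists d, 0 < d /\ forall y, Rabs (y - x) < d -> f y < 0.
Proof. intros Hc Hp. destruct (cont_eps f x (Hc x) (- f x) ltac:(lra)) as [d [Hd H]]. exists d; split; auto.
  intros y Hy. specialize (H y Hy). apply Rabs_def2 in H. lra. Qed.

Lemma abs_sh x sg h : 0 <= h -> Rabs (x + sgn sg * h - x) = h.
Proof. intros. replace (x + sgn sg * h - x) with (sgn sg * h) by ring. destruct sg; unfold sgn.
  rewrite Rmult_1_l, Rabs_right; lra. rewrite Rabs_left1; lra. Qed.

Lemma sign_lemma a b sg : 0 < b - a < 1 ->
  exists d, 0 < d /\ forall h, 0 <= h < d -> sgn sg * cross (e a) (e b) (e (a + sgn sg * h)) <= 0.
Proof. intros Hab. pose proof PI_RGT_0 as HPI.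
  assert (S1 : 0 < sin (PI * (b - a))) by (apply sin_gt_0; nra).
  assert (S0 : sin (PI * (a - b)) < 0). { replace (PI * (a - b)) with (- (PI * (b - a))) by ring. rewrite sin_neg; lra. }
  destruct (cont_neg (fun c => sin (PI * (c - b))) a ltac:(reg) S0) as [d [Hd Hs]].
  exists (Rmin d 1); split. apply Rmin_glb_lt; lra. intros h [H0 Hh].
  pose proof (Rmin_l d 1); pose proof (Rmin_r d 1).
  set (c := a + sgn sg * h).
  assert (Hc : sin (PI * (c - b)) < 0) by (apply Hs; unfold c; rewrite abs_sh; lra).
  assert (Sh : 0 <= sin (PI * h)). { destruct H0 as [H0|H0]. left; apply sin_gt_0; nra. subst; rewrite Rmult_0_r, sin_0; lra. }
  rewrite !e_vv, cross_vv by apply hx_n2. rewrite !crs_hx.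
  assert (0 <= sin (PI * (b - a)) * (- sin (PI * (c - b))) * sin (PI * h)) by (apply Rmult_le_pos; [apply Rmult_le_pos|]; lra).
  destruct sg; unfold c, sgn in *.
  - replace (PI * (a - (a + 1 * h))) with (- (PI * h)) by ring. rewrite sin_neg. nra.
  - replace (PI * (a - (a + -1 * h))) with (PI * h) by ring. nra.
Qed.

Definition good n P B F := convex_polygon n P B /\ (forall x, B x -> in_disk x) /\ (2 <= n)%nat /\
  continuity F /\ (forall t, e (F t) = psi B (e t)) /\ (forall t, t < F t < t + 1) /\ (forall t, F (t + 1) = F t + 1).

Definition lam (v w X : pt) := ((fst X - fst v) * (fst w - fst v) + (snd X - snd v) * (snd w - snd v)) / ((fst w - fst v)^2 + (snd w - snd v)^2).
Definition onl (v w : pt) (l : R) : pt := (fst v + l * (fst w - fst v), snd v + l * (snd w - snd v)).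

Lemma on_chord v w X : w <> v -> cross v w X = 0 -> X = onl v w (lam v w X).
Proof. intros N C. pose proof (pt_neq_n2 _ _ N) as Q.
  pose proof (par_scale (fst w - fst v, snd w - snd v) (fst X - fst v, snd X - snd v)) as K.
  unfold n2, crs in K; cbn [fst snd] in K. specialize (K Q). unfold cross in C. specialize (K C).
  unfold onl, lam. destruct X as [x1 x2]. cbn [fst snd] in *.
  assert (E1 := f_equal fst K). assert (E2 := f_equal snd K). cbn [fst snd] in E1, E2. f_equal; lra. Qed.

Lemma cross_onl v w l X : cross v (onl v w l) X = l * cross v w X.
Proof. unfold cross, onl; cbn [fst snd]; ring. Qed.

Lemma cross_chord v w l1 l2 c : cross c (onl v w l1) (onl v w l2) = (l2 - l1) * cross v w c.
Proof. unfold cross, onl; cbn [fst snd]; ring. Qed.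

Lemma good_psi_rel n P B F s : good n P B F -> psi_rel B (e s) (e (F s)).
Proof. intros (Hp & Hd & Hn & Hc & Hl & _). rewrite Hl. apply (psi_spec n P); auto. lia. apply e_circle. Qed.

Lemma good_vertex_disk n P B F i : good n P B F -> (i < n)%nat -> in_disk (P i).
Proof. intros (Hp & Hd & _). intros. apply Hd, (poly_vertex_B n); auto. Qed.

Lemma good_cross_nonneg n P B F s i : good n P B F -> (i < n)%nat -> 0 <= cross (e s) (e (F s)) (P i).
Proof. intros G Hi. destruct (good_psi_rel n P B F s G) as [_ [_ [_ L]]]. apply L.
  destruct G as (Hp & _). apply (poly_vertex_B n); auto. Qed.

Lemma good_lam n P B F s i : good n P B F -> (i < n)%nat -> cross (e s) (e (F s)) (P i) = 0 ->
  0 < lam (e s) (e (F s)) (P i) < 1 /\ P i = onl (e s) (e (F s)) (lam (e s) (e (F s)) (P i)).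
Proof. intros G Hi C. destruct (good_psi_rel n P B F s G) as [Cw [Nw _]].
  assert (E := on_chord _ _ _ Nw C). split; auto. apply (chord_in_disk (e s) (e (F s))); auto. apply e_circle.
  unfold onl in E. rewrite <- E. apply (good_vertex_disk n P B F); auto. Qed.

Definition sspec n P (B : pt -> Prop) F s (k : nat * nat) := 
  (fst k < n)%nat /\ (snd k < n)%nat /\ cross (e s) (e (F s)) (P (fst k)) = 0 /\ cross (e s) (e (F s)) (P (snd k)) = 0 /\
  forall i, (i < n)%nat -> cross (e s) (e (F s)) (P i) = 0 ->
    lam (e s) (e (F s)) (P i) <= lam (e s) (e (F s)) (P (fst k)) /\ lam (e s) (e (F s)) (P (snd k)) <= lam (e s) (e (F s)) (P i).

Lemma sspec_ex n P B F s : good n P B F -> exists k, sspec n P B F s k.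
Proof. intros G. pose proof (good_psi_rel n P B F s G) as [Cw [Nw [[u [t [Bu Eu]]] L]]].
  pose proof G as (Hp & Hd & Hn & _).
  assert (Cu : cross (e s) (e (F s)) u = 0). { subst u. unfold cross; cbn [fst snd]; ring. }
  assert (Hu : in_hull (fun _ => True) n P u) by (destruct Hp as [Hh _]; apply Hh; auto).
  destruct (hull_cross_zero n P (e s) (e (F s)) u Hu (fun i Hi => good_cross_nonneg n P B F s i G Hi) Cu) as [i0 [Hi0 Ci0]].
  destruct (argmax_sub (fun i => cross (e s) (e (F s)) (P i) = 0) (fun i => lam (e s) (e (F s)) (P i)) n ltac:(exists i0; auto)) as [kp [Hkp [Ckp Mkp]]].
  destruct (argmin_sub (fun i => cross (e s) (e (F s)) (P i) = 0) (fun i => lam (e s) (e (F s)) (P i)) n ltac:(exists i0; auto)) as [km [Hkm [Ckm Mkm]]].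
  exists (kp, km). unfold sspec; cbn [fst snd]. repeat split; auto.
  all: try (apply Mkp; auto); try (apply Mkm; auto). Qed.

Definition kk n P (B : pt -> Prop) F s := epsilon (inhabits (0%nat, 0%nat)) (sspec n P B F s).
Lemma kk_spec n P B F s : good n P B F -> sspec n P B F s (kk n P B F s).
Proof. intros G. unfold kk. apply epsilon_spec. apply sspec_ex; auto. Qed.

Definition kidx n P (B : pt -> Prop) F (sg : bool) s : nat := if sg then fst (kk n P B F s) else snd (kk n P B F s).
Definition Ps n P (B : pt -> Prop) F sg s := P (kidx n P B F sg s).

Lemma kidx_spec n P B F sg s : good n P B F -> (kidx n P B F sg s < n)%nat /\ cross (e s) (e (F s)) (Ps n P B F sg s) = 0 /\
  forall i, (i < n)%nat -> cross (e s) (e (F s)) (P i) = 0 ->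
    sgn sg * (lam (e s) (e (F s)) (P i) - lam (e s) (e (F s)) (Ps n P B F sg s)) <= 0.
Proof. intros G. destruct (kk_spec n P B F s G) as (H1 & H2 & H3 & H4 & H5). unfold Ps, kidx.
  destruct sg; unfold sgn; repeat split; auto; intros i Hi Ci; destruct (H5 i Hi Ci); lra. Qed.

Lemma local_lemma n P B F s sg : good n P B F ->
  exists d, 0 < d /\ forall h, 0 <= h < d ->
    psi B (e (s + sgn sg * h)) = sig (Ps n P B F sg s) (e (s + sgn sg * h)).
Proof. intros G. destruct (kidx_spec n P B F sg s G) as [Hk [Ck Mk]].
  set (k := kidx n P B F sg s) in *. unfold Ps in *. fold k in Ck, Mk |- *.
  destruct (good_lam n P B F s k G Hk Ck) as [Lk Ek].
  set (v := e s) in *. set (w := e (F s)) in *.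
  destruct (fin_delta (fun i h => 0 <= cross (e (s + sgn sg * h)) (P k) (P i)) n) as [d [Hd Hdd]].
  - intros i Hi. destruct (good_cross_nonneg n P B F s i G Hi) as [Cp|C0].
    + fold v w in Cp. assert (Pos : 0 < cross (e s) (P k) (P i)). { fold v. rewrite Ek, cross_onl. apply Rmult_lt_0_compat; lra. }
      destruct (cont_pos (fun t => cross (e t) (P k) (P i)) s (cont_cross_e _ _) Pos) as [d [Hd Hdd]].
      exists d; split; auto. intros h Hh. left. apply Hdd. rewrite abs_sh; lra.
    + pose proof G as (Hp & Hdk & Hn & Hc & Hl & HF & HF1).
      destruct (sign_lemma s (F s) sg ltac:(specialize (HF s); lra)) as [d [Hd Hdd]].
      exists d; split; auto. intros h Hh. specialize (Hdd h Hh). fold v w in Hdd.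
      destruct (good_lam n P B F s i G Hi (eq_sym C0)) as [Li Ei]. fold v w in Li, Ei.
      rewrite Ek, Ei, cross_chord. specialize (Mk i Hi (eq_sym C0)). fold v w in Mk.
      replace ((lam v w (P i) - lam v w (P k)) * cross v w (e (s + sgn sg * h))) with
        ((sgn sg * (lam v w (P i) - lam v w (P k))) * (sgn sg * cross v w (e (s + sgn sg * h)))) by (destruct sg; unfold sgn; ring).
      nra.
  - exists d; split; auto. intros h Hh. destruct G as (Hp & Hdk & Hn & _).
    apply (psi_eq_sig n P B); [auto|auto|auto|apply e_circle|intros i Hi; apply Hdd; auto]. Qed.

Lemma hx_pos t : 0 < n2 (hx t).
Proof. rewrite hx_n2; lra. Qed.

Lemma det_MP_pos P : in_disk P -> 0 < det (MP P).
Proof. intros H. rewrite det_MP. unfold in_disk, n2 in *. lra. Qed.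

Lemma Ps_disk n P B F sg s : good n P B F -> in_disk (Ps n P B F sg s).
Proof. intros G. destruct (kidx_spec n P B F sg s G) as [Hk _]. unfold Ps. apply (good_vertex_disk n P B F); auto. Qed.

Lemma step_par n P B F sg s t : good n P B F -> psi B (e t) = sig (Ps n P B F sg s) (e t) ->
  crs (hx (F t)) (app (MP (Ps n P B F sg s)) (hx t)) = 0.
Proof. intros G E. pose proof G as (_ & _ & _ & _ & Hl & _).
  apply vv_eq. apply hx_pos. apply app_nz. pose proof (det_MP_pos _ (Ps_disk n P B F sg s G)); lra. apply hx_pos.
  rewrite <- e_vv, Hl, E, e_vv. apply sig_vv. apply hx_n2. apply (Ps_disk n P B F sg s G). Qed.

Lemma par_at n P B F sg s : good n P B F -> crs (hx (F s)) (app (MP (Ps n P B F sg s)) (hx s)) = 0.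
Proof. intros G. destruct (local_lemma n P B F s sg G) as [d [Hd H]]. specialize (H 0 ltac:(lra)).
  rewrite Rmult_0_r, Rplus_0_r in H. apply (step_par n P B F sg s s G H). Qed.

Definition T (F : R -> R) t0 j := Nat.iter j F t0.
Definition Mat n P B F t0 sg j := MP (Ps n P B F sg (T F t0 j)).
Fixpoint Gm n P B F t0 sg j m : mat :=
  match m with O => mid | S m' => mmul (Gm n P B F t0 sg (S j) m') (Mat n P B F t0 sg j) end.

Lemma Gm_det n P B F t0 sg : good n P B F -> forall m j, 0 < det (Gm n P B F t0 sg j m).
Proof. intros G m; induction m; intros j; simpl. unfold det, mid; lra.
  rewrite det_mul. apply Rmult_lt_0_compat; auto. apply det_MP_pos, Ps_disk; auto. Qed.

Lemma propagate F s sg d2 : continuity F -> (forall x y, x < y -> F x < F y) -> 0 < d2 ->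
  exists d3, 0 < d3 /\ forall h, 0 <= h < d3 -> exists h', 0 <= h' < d2 /\ F (s + sgn sg * h) = F s + sgn sg * h'.
Proof. intros Hc Hm Hd2. destruct (cont_eps F s (Hc s) d2 Hd2) as [d3 [Hd3 H]]. exists d3; split; auto.
  intros h Hh. specialize (H (s + sgn sg * h) ltac:(rewrite abs_sh; lra)).
  exists (sgn sg * (F (s + sgn sg * h) - F s)). split.
  - destruct Hh as [[Hh|Hh] _].
    + destruct sg; unfold sgn in *. assert (F s < F (s + 1 * h)) by (apply Hm; lra).
      split; [lra|]. rewrite Rabs_right in H; lra.
      assert (F (s + -1 * h) < F s) by (apply Hm; lra). split; [lra|]. rewrite Rabs_left in H; lra.
    + subst. rewrite Rmult_0_r, Rplus_0_r, Rminus_diag, Rmult_0_r. lra.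
  - destruct sg; unfold sgn; ring. Qed.

Lemma claim n P B F t0 sg : good n P B F -> (forall x y, x < y -> F x < F y) ->
  forall m j, exists d, 0 < d /\ forall h, 0 <= h < d ->
    crs (hx (Nat.iter m F (T F t0 j + sgn sg * h))) (app (Gm n P B F t0 sg j m) (hx (T F t0 j + sgn sg * h))) = 0.
Proof. intros G Hm m. pose proof G as (_ & _ & _ & Hc & _).
  induction m; intros j.
  - exists 1; split; [lra|]. intros h _. cbn [Gm]. rewrite app_id. change (Nat.iter 0 F ?x) with x. unfold crs. ring.
  - destruct (local_lemma n P B F (T F t0 j) sg G) as [d1 [Hd1 H1]].
    destruct (IHm (S j)) as [d2 [Hd2 H2]].
    destruct (propagate F (T F t0 j) sg d2 Hc Hm Hd2) as [d3 [Hd3 H3]].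
    exists (Rmin d1 d3); split. apply Rmin_glb_lt; auto. intros h Hh.
    pose proof (Rmin_l d1 d3); pose proof (Rmin_r d1 d3).
    set (t := T F t0 j + sgn sg * h).
    assert (P1 := step_par n P B F sg (T F t0 j) t G (H1 h ltac:(lra))).
    destruct (H3 h ltac:(lra)) as [h' [Hh' Eh']]. fold t in Eh'.
    specialize (H2 h' Hh'). change (T F t0 (S j)) with (F (T F t0 j)) in H2. rewrite <- Eh' in H2.
    rewrite Nat.iter_succ_r. cbn [Gm]. rewrite app_mul.
    set (Gj := Gm n P B F t0 sg (S j) m) in *.
    apply crs_trans with (app Gj (hx (F t))); auto.
    apply app_nz. pose proof (Gm_det n P B F t0 sg G m (S j)); fold Gj in H4; lra. apply hx_pos.
    rewrite crs_app. unfold Mat. rewrite P1. ring. Qed.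

Definition lamS n P B F sg s := lam (e s) (e (F s)) (Ps n P B F sg s).

Lemma Dv_formula n P B F sg s : good n P B F ->
  0 < lamS n P B F sg s < 1 /\ 0 < n2 (app (MP (e (F s))) (hx s)) /\
  Dv (MP (Ps n P B F sg s)) (hx s) = (1 - lamS n P B F sg s) / lamS n P B F sg s *
     (((fst (e (F s)) - fst (e s))^2 + (snd (e (F s)) - snd (e s))^2) / n2 (app (MP (e (F s))) (hx s))).
Proof. intros G. destruct (kidx_spec n P B F sg s G) as [Hk [Ck _]].
  unfold Ps in *. destruct (good_lam n P B F s _ G Hk Ck) as [Hl El].
  unfold lamS, Ps. set (k := kidx n P B F sg s) in *.
  set (v := e s) in *. set (w := e (F s)) in *. set (l := lam v w (P k)) in *. clearbody l.
  assert (Ch := MP_chord (hx s) w l (hx_n2 s)). rewrite <- e_vv in Ch. fold v in Ch.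
  change (onl v w l) with (fst v + l * (fst w - fst v), snd v + l * (snd w - snd v)) in El. rewrite <- El in Ch.
  assert (Dt := det_chord v w l (e_circle s) (e_circle (F s))). rewrite <- El in Dt.
  assert (Pos : 0 < n2 (app (MP (P k)) (hx s))).
  { apply app_nz. pose proof (det_MP_pos _ (good_vertex_disk n P B F _ G Hk)); lra. apply hx_pos. }
  rewrite Ch, n2_scale in Pos. assert (0 < l^2) by nra.
  assert (K : 0 < n2 (app (MP w) (hx s))) by (apply (Rmult_lt_reg_l (l^2)); lra).
  split; auto. split; auto. unfold Dv. rewrite Ch, n2_scale, Dt, hx_n2. field. split; lra. Qed.

Lemma lam_order n P B F s : good n P B F -> lamS n P B F false s <= lamS n P B F true s.
Proof. intros G. destruct (kidx_spec n P B F true s G) as [Hk [Ck _]].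
  destruct (kidx_spec n P B F false s G) as [_ [_ M]]. specialize (M _ Hk Ck). unfold sgn, lamS in *. unfold Ps in *. lra. Qed.

Lemma Dcompare n P B F s : good n P B F ->
  Dv (MP (Ps n P B F true s)) (hx s) <= Dv (MP (Ps n P B F false s)) (hx s) /\
  0 < Dv (MP (Ps n P B F true s)) (hx s) /\
  (lamS n P B F false s < lamS n P B F true s -> Dv (MP (Ps n P B F true s)) (hx s) < Dv (MP (Ps n P B F false s)) (hx s)).
Proof. intros G. pose proof (lam_order n P B F s G) as O.
  destruct (Dv_formula n P B F true s G) as [L1 [K1 E1]]. destruct (Dv_formula n P B F false s G) as [L2 [K2 E2]].
  rewrite E1, E2.
  set (N := ((fst (e (F s)) - fst (e s)) ^ 2 + (snd (e (F s)) - snd (e s)) ^ 2) / n2 (app (MP (e (F s))) (hx s))).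
  assert (NP : 0 < N). { unfold N. apply Rdiv_lt_0_compat; auto. apply pt_neq_n2.
    destruct (good_psi_rel n P B F s G) as [_ [Nw _]]. auto. }
  set (a := lamS n P B F true s) in *. set (b := lamS n P B F false s) in *.
  assert (Q : (1 - a) / a <= (1 - b) / b).
  { unfold Rdiv. apply Rmult_le_reg_r with (a*b). nra. field_simplify; lra. }
  split; [apply Rmult_le_compat_r; lra|]. split. apply Rmult_lt_0_compat; auto. apply Rdiv_lt_0_compat; lra.
  intros Lt. apply Rmult_lt_compat_r; auto. apply Rmult_lt_reg_r with (a*b). nra. field_simplify; lra. Qed.

Lemma Dstep n P B F t0 sg j m : good n P B F ->
  Dv (Gm n P B F t0 sg j (S m)) (hx (T F t0 j)) = Dv (Gm n P B F t0 sg (S j) m) (hx (T F t0 (S j))) * Dv (Mat n P B F t0 sg j) (hx (T F t0 j)).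
Proof. intros G. cbn [Gm]. 
  assert (Pa := par_at n P B F sg (T F t0 j) G). change (F (T F t0 j)) with (T F t0 (S j)) in Pa.
  assert (Dm : 0 < det (Mat n P B F t0 sg j)) by (apply det_MP_pos, Ps_disk; auto).
  assert (K1 : 0 < n2 (app (Mat n P B F t0 sg j) (hx (T F t0 j)))) by (apply app_nz; [lra| apply hx_pos]).
  assert (Dg := Gm_det n P B F t0 sg G m (S j)).
  rewrite Dv_mul; auto. 2: apply hx_pos. 2: apply app_nz; [lra|auto].
  f_equal. apply Dv_par; auto. apply hx_pos. lra. Qed.

Lemma Dchain n P B F t0 : good n P B F -> forall m j,
  Dv (Gm n P B F t0 true j m) (hx (T F t0 j)) <= Dv (Gm n P B F t0 false j m) (hx (T F t0 j)) /\
  0 < Dv (Gm n P B F t0 true j m) (hx (T F t0 j)).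
Proof. intros G m; induction m; intros j.
  - cbn [Gm]. rewrite Dv_id by apply hx_pos. lra.
  - rewrite !Dstep by auto. destruct (IHm (S j)) as [A1 A2]. destruct (Dcompare n P B F (T F t0 j) G) as [B1 [B2 _]].
    unfold Mat. split; [apply Rmult_le_compat; lra| apply Rmult_lt_0_compat; auto]. Qed.

Lemma Dstrict n P B F t0 m : good n P B F -> lamS n P B F false t0 < lamS n P B F true t0 ->
  Dv (Gm n P B F t0 true 0 (S m)) (hx t0) < Dv (Gm n P B F t0 false 0 (S m)) (hx t0).
Proof. intros G Lt. change t0 with (T F t0 0) at 2 4. rewrite !Dstep by auto. destruct (Dchain n P B F t0 G m 1) as [A1 A2].
  destruct (Dcompare n P B F (T F t0 0) G) as [B1 [B2 B3]]. specialize (B3 Lt). unfold Mat.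
  apply Rle_lt_trans with (Dv (Gm n P B F t0 false 1 m) (hx (T F t0 1)) * Dv (MP (Ps n P B F true (T F t0 0))) (hx (T F t0 0))).
  apply Rmult_le_compat_r; lra. apply Rmult_lt_compat_l; lra. Qed.

Lemma sin_ne u : 0 < Rabs u < 1 -> sin (PI * u) <> 0.
Proof. intros [H1 H2]. pose proof PI_RGT_0. destruct (Rle_or_lt 0 u).
  rewrite Rabs_right in * by lra. assert (0 < sin (PI * u)) by (apply sin_gt_0; nra). lra.
  rewrite Rabs_left in * by lra. replace (PI * u) with (- (PI * (-u))) by ring. rewrite sin_neg.
  assert (0 < sin (PI * - u)) by (apply sin_gt_0; nra). lra. Qed.

Lemma hx_int t k : crs (hx (t + IZR k)) (hx t) = 0.
Proof. rewrite crs_hx. replace (PI * (t - (t + IZR k))) with (IZR (- k) * PI) by (rewrite opp_IZR; ring).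
  apply sin_eq_0_1. eauto. Qed.

Lemma eigen_side n P B F t0 sg q : good n P B F -> (forall x y, x < y -> F x < F y) ->
  (forall t, exists k, Nat.iter q F t = t + IZR k) ->
  Dv (Gm n P B F t0 sg 0 q) (hx t0) = 1.
Proof. intros G Hm Hq. destruct (claim n P B F t0 sg G Hm q 0) as [d [Hd H]].
  change (T F t0 0) with t0 in H. set (Gq := Gm n P B F t0 sg 0 q) in *.
  assert (Hp : forall h, 0 <= h < d -> crs (hx (t0 + sgn sg * h)) (app Gq (hx (t0 + sgn sg * h))) = 0).
  { intros h Hh. specialize (H h Hh). destruct (Hq (t0 + sgn sg * h)) as [k Hk]. rewrite Hk in H.
    apply crs_trans with (hx (t0 + sgn sg * h + IZR k)); auto. apply hx_pos.
    rewrite crs_anti, hx_int. ring. }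
  pose proof (Rmin_l d 1). pose proof (Rmin_r d 1). assert (0 < Rmin d 1) by (apply Rmin_glb_lt; lra). set (d' := Rmin d 1) in *.
  assert (Ssg : forall x, Rabs (sgn sg * x) = Rabs x) by (intros; destruct sg; unfold sgn; rewrite Rabs_mult; [rewrite Rabs_R1| rewrite (Rabs_left (-1)) by lra]; ring).
  apply (three_dirs Gq (hx t0) (hx (t0 + sgn sg * (d'/3))) (hx (t0 + sgn sg * (2*d'/3)))).
  - apply Gm_det; auto.
  - apply hx_pos. - apply hx_pos. - apply hx_pos.
  - rewrite crs_hx. apply sin_ne. replace (t0 + sgn sg * (d'/3) - t0) with (sgn sg * (d'/3)) by ring. rewrite Ssg, Rabs_right; lra.
  - rewrite crs_hx. apply sin_ne. replace (t0 + sgn sg * (2*d'/3) - t0) with (sgn sg * (2*d'/3)) by ring. rewrite Ssg, Rabs_right; lra.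
  - rewrite crs_hx. apply sin_ne. replace (t0 + sgn sg * (2*d'/3) - (t0 + sgn sg * (d'/3))) with (sgn sg * (d'/3)) by (destruct sg; unfold sgn; lra). rewrite Ssg, Rabs_right; lra.
  - pose proof (Hp 0 ltac:(lra)) as X. rewrite Rmult_0_r, Rplus_0_r in X. exact X.
  - apply Hp; lra.
  - apply Hp; lra.
Qed.

Lemma no_finite_order n P B F q : good n P B F -> (forall x y, x < y -> F x < F y) -> (1 <= q)%nat ->
  (forall t, exists k, Nat.iter q F t = t + IZR k) ->
  (exists t0, lamS n P B F false t0 < lamS n P B F true t0) -> False.
Proof. intros G Hm Hq Hk [t0 Ht0]. destruct q as [|m]; [lia|].
  pose proof (Dstrict n P B F t0 m G Ht0).
  rewrite !(eigen_side n P B F t0) in H; auto. lra. Qed.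

Lemma e_surj p : on_circle p -> exists t, e t = p.
Proof. unfold on_circle; destruct p as [x y]; cbn [fst snd]; intros H. pose proof PI_RGT_0.
  assert (Hx : -1 <= x <= 1) by nra.
  assert (Sy : sqrt (1 - x²) = Rabs y).
  { replace (1 - x²) with (y²) by (unfold Rsqr; lra). apply sqrt_Rsqr_abs. }
  destruct (Rle_or_lt 0 y).
  - exists (acos x / (2 * PI)). unfold e. replace (2 * PI * (acos x / (2 * PI))) with (acos x) by (field; lra).
    rewrite cos_acos, sin_acos, Sy, Rabs_right; auto; lra.
  - exists (- acos x / (2 * PI)). unfold e. replace (2 * PI * (- acos x / (2 * PI))) with (- acos x) by (field; lra).
    rewrite cos_neg, sin_neg, cos_acos, sin_acos, Sy, Rabs_left; auto; f_equal; lra. Qed.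

Lemma edge_exists n P B : convex_polygon n P B -> (2 <= n)%nat ->
  exists ia ib, (ia < n)%nat /\ (ib < n)%nat /\ P ia <> P ib /\ forall i, (i < n)%nat -> 0 <= cross (P ia) (P ib) (P i).
Proof. intros Hp Hn.
  destruct (argmax_sub (fun _ => True) (fun i => fst (P i)) n ltac:(exists 0%nat; split; [lia|auto])) as [i1 [Hi1 [_ M1]]].
  assert (Dis := vertices_distinct n P B Hp).
  destruct (classic (exists j, (j < n)%nat /\ j <> i1 /\ fst (P j) = fst (P i1))) as [[j [Hj [Nj Ej]]]|NA].
  - assert (Hne : P j <> P i1) by (apply Dis; auto).
    assert (Sne : snd (P j) <> snd (P i1)). { intro E2. apply Hne. destruct (P j), (P i1); cbn [fst snd] in *; subst; auto. }
    destruct (Rlt_or_le (snd (P j)) (snd (P i1))).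
    + exists j, i1. repeat split; auto. intros i Hi. specialize (M1 i Hi I). unfold cross. rewrite Ej. 
      replace ((fst (P i1) - fst (P i1)) * (snd (P i) - snd (P j)) - (snd (P i1) - snd (P j)) * (fst (P i) - fst (P i1)))
        with ((snd (P i1) - snd (P j)) * (fst (P i1) - fst (P i))) by ring. apply Rmult_le_pos; lra.
    + exists i1, j. repeat split; auto. intros i Hi. specialize (M1 i Hi I). unfold cross. rewrite Ej.
      replace ((fst (P i1) - fst (P i1)) * (snd (P i) - snd (P i1)) - (snd (P j) - snd (P i1)) * (fst (P i) - fst (P i1)))
        with ((snd (P j) - snd (P i1)) * (fst (P i1) - fst (P i))) by ring. apply Rmult_le_pos; lra.
  - assert (Lt : forall j, (j < n)%nat -> j <> i1 -> fst (P j) < fst (P i1)).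
    { intros j Hj Nj. destruct (M1 j Hj I); auto. exfalso; apply NA; exists j; auto. }
    set (ratio := fun j => (snd (P j) - snd (P i1)) / (fst (P i1) - fst (P j))).
    destruct (argmax_sub (fun j => j <> i1) ratio n) as [k [Hk [Nk Mk]]].
    { destruct (Nat.eq_dec i1 0). exists 1%nat; split; lia. exists 0%nat; split; lia. }
    exists i1, k. split; [auto|]. split; [auto|]. split. { apply (Dis i1 k Hi1 Hk). intro E; apply Nk; auto. }
    intros i Hi. destruct (Nat.eq_dec i i1). subst. unfold cross; lra.
    specialize (Mk i Hi n0). unfold ratio in Mk. pose proof (Lt i Hi n0). pose proof (Lt k Hk Nk).
    assert (Ak : 0 < fst (P i1) - fst (P k)) by lra. assert (Ai : 0 < fst (P i1) - fst (P i)) by lra.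
    set (ak := fst (P i1) - fst (P k)) in *. set (ai := fst (P i1) - fst (P i)) in *.
    set (bk := snd (P k) - snd (P i1)) in *. set (bi := snd (P i) - snd (P i1)) in *.
    assert (E : cross (P i1) (P k) (P i) = ak * ai * (bk / ak - bi / ai)).
    { unfold cross. fold bi bk. replace (fst (P k) - fst (P i1)) with (- ak) by (unfold ak; ring).
      replace (fst (P i) - fst (P i1)) with (- ai) by (unfold ai; ring). field. split; intro; lra. }
    rewrite E. apply Rmult_le_pos; [apply Rmult_le_pos|]; lra.
Qed.

Lemma break_exists n P B F : good n P B F -> exists t0, lamS n P B F false t0 < lamS n P B F true t0.
Proof. intros G. pose proof G as (Hp & Hd & Hn & Hc & Hl & HF & HF1).
  destruct (edge_exists n P B Hp Hn) as [ia [ib [Ha [Hb [Nab Lab]]]]].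
  set (A := P ia) in *. set (Bp := P ib) in *.
  assert (DA : in_disk A) by (apply (good_vertex_disk n P B F); auto).
  set (d1 := fst Bp - fst A). set (d2 := snd Bp - snd A).
  assert (Nd : 0 < d1^2 + d2^2) by (apply pt_neq_n2; auto).
  set (ad := fst A * d1 + snd A * d2).
  set (Dsc := ad^2 + (d1^2+d2^2) * (1 - (fst A^2 + snd A^2))).
  assert (HD : ad^2 < Dsc). { unfold Dsc. unfold in_disk in DA. nra. }
  assert (HS : 0 <= sqrt Dsc) by apply sqrt_pos.
  assert (S2 : sqrt Dsc * sqrt Dsc = Dsc) by (apply sqrt_sqrt; nra).
  assert (HSa : ad < sqrt Dsc). { destruct (Rle_or_lt (sqrt Dsc) ad); auto. nra. }
  assert (HSb : - ad < sqrt Dsc). { destruct (Rle_or_lt (sqrt Dsc) (- ad)); auto. nra. }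
  set (ta := (ad + sqrt Dsc) / (d1^2 + d2^2)).
  assert (Tpos : 0 < ta) by (unfold ta; apply Rdiv_lt_0_compat; lra).
  set (a := (fst A - ta * d1, snd A - ta * d2)).
  assert (Ca : on_circle a).
  { unfold on_circle, a; cbn [fst snd].
    assert (E : ta * (d1^2+d2^2) = ad + sqrt Dsc) by (unfold ta; field; lra).
    transitivity ((fst A^2 + snd A^2) - ta * (2 * ad - ta * (d1^2+d2^2))); [unfold ad; ring|].
    rewrite E. replace (2 * ad - (ad + sqrt Dsc)) with (ad - sqrt Dsc) by ring.
    apply (Rmult_eq_reg_r (d1^2+d2^2)); [|lra].
    replace ((fst A ^ 2 + snd A ^ 2 - ta * (ad - sqrt Dsc)) * (d1 ^ 2 + d2 ^ 2)) with
      ((fst A ^ 2 + snd A ^ 2) * (d1 ^ 2 + d2 ^ 2) - (ta * (d1^2+d2^2)) * (ad - sqrt Dsc)) by ring.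
    rewrite E. replace ((ad + sqrt Dsc) * (ad - sqrt Dsc)) with (ad^2 - sqrt Dsc * sqrt Dsc) by ring. rewrite S2. unfold Dsc. ring. }
  assert (Xa : forall X, cross a A X = ta * cross A Bp X). { intros X. unfold cross, a, d1, d2; cbn [fst snd]. ring. }
  destruct (e_surj a Ca) as [t0 Et0]. exists t0.
  assert (Ps0 : psi B a = sig A a).
  { apply (psi_eq_sig n P B); auto. intros i Hi. rewrite Xa. apply Rmult_le_pos; [lra| auto]. }
  assert (Ew : e (F t0) = sig A a) by (rewrite Hl, Et0; auto).
  assert (TA : 0 < tau A a) by (apply tau_pos; auto).
  assert (CwA : cross (e t0) (e (F t0)) A = 0). { rewrite Ew, Et0, cross_sig, Xa. unfold cross; ring. }
  assert (CwB : cross (e t0) (e (F t0)) Bp = 0). { rewrite Ew, Et0, cross_sig, Xa. unfold cross; ring. }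
  destruct (kidx_spec n P B F true t0 G) as [_ [_ Mt]]. destruct (kidx_spec n P B F false t0 G) as [_ [_ Mf]].
  specialize (Mt ib Hb CwB). specialize (Mf ia Ha CwA). unfold sgn in Mt, Mf. fold A Bp in Mt, Mf.
  assert (Lt : lam (e t0) (e (F t0)) A < lam (e t0) (e (F t0)) Bp).
  { rewrite Ew, Et0. unfold lam, sig, a, d1, d2; cbn [fst snd].
    set (tA := tau A (fst A - ta * (fst Bp - fst A), snd A - ta * (snd Bp - snd A))) in *.
    assert (TA' : 0 < tA) by exact TA.
    set (N := (fst A - ta * (fst Bp - fst A) + tA * (fst A - (fst A - ta * (fst Bp - fst A))) - (fst A - ta * (fst Bp - fst A))) ^ 2 +
      (snd A - ta * (snd Bp - snd A) + tA * (snd A - (snd A - ta * (snd Bp - snd A))) - (snd A - ta * (snd Bp - snd A))) ^ 2).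
    assert (NP : 0 < N). { unfold N. replace (fst A - ta * (fst Bp - fst A) + tA * (fst A - (fst A - ta * (fst Bp - fst A))) - (fst A - ta * (fst Bp - fst A))) with (tA * ta * d1) by (unfold d1; ring).
      replace (snd A - ta * (snd Bp - snd A) + tA * (snd A - (snd A - ta * (snd Bp - snd A))) - (snd A - ta * (snd Bp - snd A))) with (tA * ta * d2) by (unfold d2; ring).
      assert (0 < (tA * ta)^2) by (apply sq_pos; apply Rgt_not_eq, Rmult_lt_0_compat; auto). nra. }
    unfold Rdiv. apply Rmult_lt_compat_r. apply Rinv_0_lt_compat; auto.
    assert (0 < tA * ta * (d1^2 + d2^2)) by (apply Rmult_lt_0_compat; nra).
    unfold d1, d2 in *. nra. }
  unfold lamS. lra. Qed.

Lemma F_shift F : (forall t, F (t + 1) = F t + 1) -> forall t k, F (t + IZR k) = F t + IZR k.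
Proof. intros H t k. exact (iter_shift F H 1 k t). Qed.

Lemma mono F : continuity F -> (forall t, F (t + 1) = F t + 1) -> (forall x y, F x = F y -> x = y) ->
  forall a b, a < b -> F a < F b.
Proof. intros Hc Hs Hi a b Hab. destruct (Rlt_or_le (F a) (F b)) as [|Hle]; auto. exfalso.
  assert (Hlt : F b < F a). { destruct Hle; auto. apply Hi in H. lra. }
  destruct (archimed (F a - F b)) as [A1 _].
  set (k := up (F a - F b)) in *.
  assert (Kp : 0 < IZR k) by lra.
  destruct (IVT_cor (fun x => F x - F a) b (b + IZR k) ltac:(apply continuity_minus; [auto| apply continuity_const; intros ? ?; auto]) ltac:(lra))
    as [z [Hz Ez]].
  { rewrite F_shift by auto. assert (0 <= F b + IZR k - F a) by lra. assert (F b - F a <= 0) by lra. nra. }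
  assert (z = a) by (apply Hi; lra). lra. Qed.

Theorem lemma2p7 (n : nat) (P : nat -> pt) (B : pt -> Prop) :
  (2 <= n)%nat ->
  convex_polygon n P B ->
  (forall x, B x -> in_disk x) ->
  (exists r, is_rational r /\ rotation_number_is (psi B) r) ->
  ~ conj_to_rotation (psi B).
Proof. intros Hn Hp Hd [r [[pz [qz [Hq Hr]]] [F [[Hc [Hl H0]] Hcv]]]] Hconj.
  assert (Pc : forall v, on_circle v -> on_circle (psi B v) /\ psi B v <> v) by (intros; apply (psi_circle n P); auto; lia).
  destruct (lift_props (psi B) F (conj (Hc) (conj Hl H0)) (fun t => proj2 (Pc (e t) (e_circle t)))) as [HF1 HFs].
  set (q := Z.to_nat qz).
  assert (Qr : INR q = IZR qz) by (unfold q; rewrite INR_IZR_INZ; f_equal; lia).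
  assert (Q1 : (1 <= q)%nat) by (unfold q; lia).
  destruct (periodic_point F q (IZR pz) r ltac:(lia) ltac:(rewrite Qr; auto) Hc HFs (Hcv 0)) as [x0 Hx0].
  assert (Fo := finite_order2 (psi B) F q pz (fun x Hx => proj1 (Pc x Hx)) Hl Hconj ltac:(exists x0; auto)).
  assert (Ik : forall t, exists k, Nat.iter q F t = t + IZR k).
  { intros t. apply e_eq. rewrite (e_iter (psi B) F Hl). apply Fo. }
  assert (Inj : forall x y, F x = F y -> x = y).
  { intros x y E. assert (E1 : psi B (e x) = psi B (e y)) by (rewrite <- (Hl x), <- (Hl y), E; auto).
    assert (E2 : e x = e y).
    { rewrite <- (Fo x), <- (Fo y). destruct q as [|q']; [lia|]. rewrite !Nat.iter_succ_r, E1. auto. }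
    destruct (e_eq _ _ E2) as [k Hk]. rewrite Hk, F_shift in E by auto.
    assert (IZR k = 0) by lra. rewrite H in Hk. lra. }
  assert (Hm := mono F Hc HFs Inj).
  assert (G : good n P B F) by exact (conj Hp (conj Hd (conj Hn (conj Hc (conj Hl (conj HF1 HFs)))))).
  
  apply (no_finite_order n P B F q G Hm Q1 Ik). apply break_exists; auto. Qed.
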